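(* Let $G$ be an infinite group. Then (i) $BR_G$ is a translation invariant ideal in $\mathcal{P}_G$; (ii) $BR_G^{\wedge}$ is a closed ideal of the semigroup $\beta G$, and an ultrafilter $p\in\beta G$ belongs to $BR_G^{\wedge}$ if and only if every member $P\in p$ contains an $(n,n)$-rectangle for every $n\in\mathbb{N}$; (iii) $BR_G\subsetneq FT_G$.
   Context: For $X,Y\subseteq G$, the product $XY$ is an $(n,m)$-rectangle if $|X|=n$, $|Y|=m$; a set $A$ has (contains) an $(n,m)$-rectangle if $XY\subseteq A$ for some such $X,Y$. $A$ has bounded rectangles if there is $n\in\mathbb{N}$ such that $A$ contains no $(n,n)$-rectangle; $BR_G$ is the family of such sets. An ideal in $\mathcal{P}_G$ is a family closed under finite unions and subsets not containing $G$; it is translation invariant if $gA,Ag$ belong to it whenever $A$ does. $A$ is $n$-thin if $g_0A\cap\dots\cap g_nA$ is finite for all distinct $g_0,\dots,g_n$; $FT_G$ is the family of sets that are $n$-thin for some $n$. $\beta G$ is the semigroup of ultrafilters on $G$, and $\mathcal{I}^{\wedge}=\{p\in\beta G: G\setminus A\in p$ for each $A\in\mathcal{I}\}$. *)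

(* Defs.v *)
From Stdlib Require Import List.
Import ListNotations.
Set Implicit Arguments.

Record Group := {
  carrier :> Type;
  gmul : carrier -> carrier -> carrier;
  gone : carrier;
  ginv : carrier -> carrier;
  gmulA : forall x y z, gmul x (gmul y z) = gmul (gmul x y) z;
  gmul1l : forall x, gmul gone x = x;
  gmul1r : forall x, gmul x gone = x;
  gmulVl : forall x, gmul (ginv x) x = gone;
  gmulVr : forall x, gmul x (ginv x) = gone }.

Section Defs.
Variable G : Group.

Definition gset := G -> Prop.
Definition family := gset -> Prop.

Definition infinite_group : Prop := ~ exists l : list G, forall x : G, In x l.

Definition finite_set (A : gset) : Prop := exists l : list G, forall x, A x -> In x l.

Definition has_card (X : gset) (n : nat) : Prop :=
  exists l : list G, length l = n /\ NoDup l /\ forall x, X x <-> In x l.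

Definition has_rectangle (A : gset) (n m : nat) : Prop :=
  exists X Y : gset, has_card X n /\ has_card Y m /\
    forall x y, X x -> Y y -> A (gmul G x y).

Definition BR (A : gset) : Prop := exists n : nat, ~ has_rectangle A n n.

Definition ltrans (g : G) (A : gset) : gset := fun x => exists a, A a /\ x = gmul G g a.
Definition rtrans (A : gset) (g : G) : gset := fun x => exists a, A a /\ x = gmul G a g.

Definition n_thin (n : nat) (A : gset) : Prop :=
  forall gs : list G, length gs = S n -> NoDup gs ->
    finite_set (fun x => forall g, In g gs -> ltrans g A x).

Definition FT (A : gset) : Prop := exists n : nat, n_thin n A.

Definition full : gset := fun _ => True.
Definition empty : gset := fun _ => False.
Definition compl (A : gset) : gset := fun x => ~ A x.
Definition union (A B : gset) : gset := fun x => A x \/ B x.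
Definition inter (A B : gset) : gset := fun x => A x /\ B x.
Definition subset (A B : gset) : Prop := forall x, A x -> B x.

Definition is_ideal (I : family) : Prop :=
  I empty /\
  (forall A B, I A -> I B -> I (union A B)) /\
  (forall A B, subset B A -> I A -> I B) /\
  ~ I full.

Definition translation_invariant (I : family) : Prop :=
  forall A g, I A -> I (ltrans g A) /\ I (rtrans A g).

Definition ultrafilter (p : family) : Prop :=
  p full /\ ~ p empty /\
  (forall A B, subset A B -> p A -> p B) /\
  (forall A B, p A -> p B -> p (inter A B)) /\
  (forall A, p A \/ p (compl A)).

Definition umul (p q : family) : family :=
  fun A => p (fun x => q (fun y => A (gmul G x y))).

Definition hat (I : family) : family -> Prop :=
  fun p => ultrafilter p /\ forall A, I A -> p (compl A).

(* closed subsets of beta G (Stone topology: basic open sets {q : A ∈ q}) *)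
Definition closed_in_beta (K : family -> Prop) : Prop :=
  (forall p, K p -> ultrafilter p) /\
  forall p, ultrafilter p -> ~ K p ->
    exists A, p A /\ forall q, ultrafilter q -> q A -> ~ K q.

Definition semigroup_ideal (K : family -> Prop) : Prop :=
  (forall p, K p -> ultrafilter p) /\
  (exists p, K p) /\
  forall p q, ultrafilter p -> ultrafilter q ->
    (K p -> K (umul p q)) /\ (K q -> K (umul p q)).

End Defs.

(* Main.v *)
Require Import Defs.
From mathcomp Require boolp classical_sets filter.
From Stdlib Require Import List Lia Arith Classical ClassicalEpsilon.
Import ListNotations.
Local Infix "•" := (gmul _) (at level 40, left associativity).
Local Notation inv := (ginv _).

Lemma ultra_ext (T : Type) (F : (T -> Prop) -> Prop) :
  F (fun _ => True) -> ~ F (fun _ => False) ->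
  (forall A B, F A -> F B -> F (fun x => A x /\ B x)) ->
  (forall A B, (forall x, A x -> B x) -> F A -> F B) ->
  exists U : (T -> Prop) -> Prop, (forall A, F A -> U A) /\ U (fun _ => True) /\ ~ U (fun _ => False) /\
   (forall A B, (forall x, A x -> B x) -> U A -> U B) /\
   (forall A B, U A -> U B -> U (fun x => A x /\ B x)) /\
   (forall A, U A \/ U (fun x => ~ A x)).
Proof.
intros FT F0 FI FS.
assert (PF : filter.ProperFilter F).
{ constructor. exact F0. constructor. exact FT. intros A B; apply FI. intros A B; apply FS. }
destruct (filter.ultraFilterLemma PF) as [U [UU sFU]].
exists U. split. exact sFU.
pose proof (@filter.ultra_proper _ _ UU) as UF.
pose proof (@filter.filter_filter _ _ UF) as UFF.
split. exact (@filter.filterT _ _ UFF).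
split. exact (@filter.filter_not_empty _ U UF).
split. intros A B; apply (@filter.filterS _ _ UFF).
split. intros A B; apply (@filter.filterI _ _ UFF).
intros A; exact (@filter.in_ultra_setVsetC _ U A UU).
Qed.


Lemma mulA {G : Group} (x y z : G) : x • (y • z) = x • y • z.
Proof. apply gmulA. Qed.
Lemma mulKl {G : Group} (x y : G) : inv x • (x • y) = y.
Proof. rewrite mulA, gmulVl, gmul1l. reflexivity. Qed.
Lemma mulKl' {G : Group} (x y : G) : x • (inv x • y) = y.
Proof. rewrite mulA, gmulVr, gmul1l. reflexivity. Qed.
Lemma mulKr {G : Group} (x y : G) : x • y • inv y = x.
Proof. rewrite <- mulA, gmulVr, gmul1r. reflexivity. Qed.
Lemma mulKr' {G : Group} (x y : G) : x • inv y • y = x.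
Proof. rewrite <- mulA, gmulVl, gmul1r. reflexivity. Qed.
Lemma mul_injl {G : Group} (g x y : G) : g • x = g • y -> x = y.
Proof. intros H. rewrite <- (mulKl g x), <- (mulKl g y), H. reflexivity. Qed.
Lemma mul_injr {G : Group} (g x y : G) : x • g = y • g -> x = y.
Proof. intros H. rewrite <- (mulKr x g), <- (mulKr y g), H. reflexivity. Qed.
Lemma inv_uniq {G : Group} (x y : G) : x • y = gone G -> y = inv x.
Proof. intros H. apply (mul_injl x). rewrite H, gmulVr. reflexivity. Qed.
Lemma invM {G : Group} (x y : G) : inv (x • y) = inv y • inv x.
Proof. symmetry. apply inv_uniq. rewrite mulA, <- (mulA x y), gmulVr, gmul1r, gmulVr. reflexivity. Qed.
Lemma invK {G : Group} (x : G) : inv (inv x) = x.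
Proof. symmetry. apply inv_uniq. apply gmulVl. Qed.
Lemma inv_inj {G : Group} (x y : G) : inv x = inv y -> x = y.
Proof. intros H. rewrite <- (invK x), H, invK. reflexivity. Qed.

Lemma rect_iff {G : Group} (A : gset G) n m :
  has_rectangle A n m <-> exists lx ly : list G, length lx = n /\ NoDup lx /\
     length ly = m /\ NoDup ly /\ forall x y, In x lx -> In y ly -> A (x • y).
Proof.
  split.
  - intros [X [Y [[lx [Hlx [Nx HX]]] [[ly [Hly [Ny HY]]] H]]]].
    exists lx, ly. repeat split; auto.
    intros x y Hx Hy. apply H; [apply HX | apply HY]; auto.
  - intros [lx [ly [Hlx [Nx [Hly [Ny H]]]]]].
    exists (fun x => In x lx), (fun y => In y ly). split; [|split].
    + exists lx. repeat split; auto.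
    + exists ly. repeat split; auto.
    + auto.
Qed.

Lemma trunc {T : Type} (k : nat) (l : list T) : NoDup l -> k <= length l ->
  exists l', length l' = k /\ NoDup l' /\ incl l' l.
Proof.
  revert k. induction l as [|a l IH]; intros k Hn Hk.
  - exists []. simpl in Hk. repeat split; [simpl; lia | constructor | intros x []].
  - destruct k as [|k].
    + exists []. repeat split; [constructor | intros x []].
    + inversion Hn; subst. simpl in Hk. destruct (IH k) as [l' [E1 [E2 E3]]]; auto; try lia.
      exists (a :: l'). repeat split.
      * simpl; lia.
      * constructor; auto.
      * intros x [<-|Hx]; [left; auto | right; auto].
Qed.

Lemma NoDup_map_inj {T U : Type} (f : T -> U) (l : list T) :
  (forall x y, f x = f y -> x = y) -> NoDup l -> NoDup (map f l).
Proof.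
  intros Hf Hn. induction Hn; simpl; constructor; auto.
  intros Hin. apply in_map_iff in Hin. destruct Hin as [y [Hy Hy']].
  apply Hf in Hy. subst. auto.
Qed.

Lemma rect_mono {G : Group} (A : gset G) n k : has_rectangle A n n -> k <= n -> has_rectangle A k k.
Proof.
  intros H Hk. apply rect_iff in H. apply rect_iff.
  destruct H as [lx [ly [H1 [H2 [H3 [H4 H5]]]]]].
  destruct (trunc k lx) as [lx' [A1 [A2 A3]]]; auto; try lia.
  destruct (trunc k ly) as [ly' [B1 [B2 B3]]]; auto; try lia.
  exists lx', ly'. repeat split; auto.
Qed.

Lemma rect_subset {G : Group} (A B : gset G) n m : subset A B -> has_rectangle A n m -> has_rectangle B n m.
Proof.
  intros HS [X [Y [H1 [H2 H3]]]]. exists X, Y. repeat split; auto.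
Qed.

Lemma BR_subset {G : Group} (A B : gset G) : subset B A -> BR A -> BR B.
Proof.
  intros HS [n Hn]. exists n. intros H. apply Hn. eapply rect_subset; eauto.
Qed.

Lemma avoid {G : Group} : infinite_group G -> forall l : list G, exists x, ~ In x l.
Proof.
  intros HG l. apply NNPP. intros H. apply HG. exists l. intros x.
  apply NNPP. intros Hx. apply H. exists x. auto.
Qed.

Lemma nodup_n {G : Group} : infinite_group G -> forall n, exists l : list G, length l = n /\ NoDup l.
Proof.
  intros HG n. induction n as [|n [l [H1 H2]]].
  - exists []. split; auto. constructor.
  - destruct (avoid HG l) as [x Hx]. exists (x :: l). split; simpl; auto. constructor; auto.
Qed.

Lemma split_list {T : Type} (P : T -> Prop) (l : list T) : NoDup l ->
  exists l1 l2, NoDup l1 /\ NoDup l2 /\ incl l1 l /\ incl l2 l /\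
    length l1 + length l2 = length l /\ (forall x, In x l1 -> P x) /\ (forall x, In x l2 -> ~ P x).
Proof.
  induction l as [|a l IH]; intros Hn.
  - exists [], []. repeat split; try constructor; try (intros x []); auto.
  - inversion Hn; subst. destruct IH as [l1 [l2 [N1 [N2 [I1 [I2 [L [P1 P2]]]]]]]]; auto.
    destruct (classic (P a)) as [Ha|Ha].
    + exists (a :: l1), l2. repeat split.
      * constructor; auto.
      * auto.
      * intros x [<-|Hx]; [left|right]; auto.
      * intros x Hx; right; auto.
      * simpl; lia.
      * intros x [<-|Hx]; auto.
      * auto.
    + exists l1, (a :: l2). repeat split.
      * auto.
      * constructor; auto.
      * intros x Hx; right; auto.
      * intros x [<-|Hx]; [left|right]; auto.
      * simpl; lia.
      * auto.
      * intros x [<-|Hx]; auto.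
Qed.

Lemma homog {T : Type} (C : T -> T -> Prop) (ly : list T) : forall c (lx : list T),
  NoDup lx -> c * Nat.pow 2 (length ly) <= length lx ->
  exists lx', NoDup lx' /\ incl lx' lx /\ c <= length lx' /\
    forall y, In y ly -> (forall x, In x lx' -> C x y) \/ (forall x, In x lx' -> ~ C x y).
Proof.
  induction ly as [|y ly IH]; intros c lx Hn Hl.
  - exists lx. simpl in Hl. split; [auto|split; [intros z Hz; auto|split; [lia|intros y []]]].
  - destruct (split_list (fun x => C x y) lx Hn) as [l1 [l2 [N1 [N2 [I1 [I2 [L [P1 P2]]]]]]]].
    simpl in Hl.
    assert (c * Nat.pow 2 (length ly) <= length l1 \/ c * Nat.pow 2 (length ly) <= length l2) as [H|H] by lia.
    + destruct (IH c l1 N1 H) as [lx' [M1 [M2 [M3 M4]]]].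
      exists lx'. split; [auto|split; [|split; [auto|]]].
      * intros x Hx; apply I1, M2, Hx.
      * intros y' [<-|Hy]; [left; intros x Hx; apply P1, M2, Hx | auto].
    + destruct (IH c l2 N2 H) as [lx' [M1 [M2 [M3 M4]]]].
      exists lx'. split; [auto|split; [|split; [auto|]]].
      * intros x Hx; apply I2, M2, Hx.
      * intros y' [<-|Hy]; [right; intros x Hx; apply P2, M2, Hx | auto].
Qed.

Lemma BR_empty {G : Group} : BR (@empty G).
Proof.
  exists 1. intros H. apply rect_iff in H. destruct H as [lx [ly [H1 [_ [H3 [_ H5]]]]]].
  destruct lx as [|x lx]; [discriminate|]. destruct ly as [|y ly]; [discriminate|].
  apply (H5 x y); left; auto.
Qed.

Lemma not_BR_full {G : Group} : infinite_group G -> ~ BR (@full G).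
Proof.
  intros HG [n Hn]. apply Hn. destruct (nodup_n HG n) as [l [H1 H2]].
  apply rect_iff. exists l, l. repeat split; auto.
Qed.

Lemma BR_union {G : Group} (A B : gset G) : BR A -> BR B -> BR (union A B).
Proof.
  intros [n1 H1] [n2 H2].
  set (t := n1 + n2).
  assert (HA : ~ has_rectangle A t t) by (intros H; apply H1; eapply rect_mono; eauto; unfold t; lia).
  assert (HB : ~ has_rectangle B t t) by (intros H; apply H2; eapply rect_mono; eauto; unfold t; lia).
  exists (t * Nat.pow 2 (2 * t) + 2 * t). intros H. apply rect_iff in H.
  destruct H as [lx [ly [L1 [N1 [L2 [N2 Hxy]]]]]].
  destruct (trunc (2 * t) ly) as [ly0 [M1 [M2 M3]]]; auto; try lia.
  destruct (homog (fun x y => A (x • y)) ly0 t lx) as [lx' [K1 [K2 [K3 K4]]]]; auto.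
  { rewrite M1. lia. }
  destruct (split_list (fun y => forall x, In x lx' -> A (x • y)) ly0 M2)
    as [l1 [l2 [Q1 [Q2 [Q3 [Q4 [Q5 [Q6 Q7]]]]]]]].
  assert (t <= length l1 \/ t <= length l2) as [Hl|Hl] by lia.
  - apply HA. apply rect_iff.
    destruct (trunc t lx') as [a [a1 [a2 a3]]]; auto.
    destruct (trunc t l1) as [b [b1 [b2 b3]]]; auto.
    exists a, b. repeat split; auto.
  - apply HB. apply rect_iff.
    destruct (trunc t lx') as [a [a1 [a2 a3]]]; auto.
    destruct (trunc t l2) as [b [b1 [b2 b3]]]; auto.
    exists a, b. repeat split; auto.
    intros x y Hx Hy.
    assert (Hy0 : In y ly0) by (apply Q4, b3, Hy).
    destruct (K4 y Hy0) as [HH|HH].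
    + exfalso. apply (Q7 y (b3 y Hy)). exact HH.
    + destruct (Hxy x y) as [HAxy|HBxy].
      * apply K2, a3, Hx.
      * apply M3, Hy0.
      * exfalso. apply (HH x (a3 x Hx)). exact HAxy.
      * exact HBxy.
Qed.

Lemma BR_ltrans {G : Group} (A : gset G) g : BR A -> BR (ltrans g A).
Proof.
  intros [n Hn]. exists n. intros H. apply Hn. apply rect_iff in H. apply rect_iff.
  destruct H as [lx [ly [H1 [H2 [H3 [H4 H5]]]]]].
  exists (map (fun x => inv g • x) lx), ly. repeat split; auto.
  - rewrite length_map; auto.
  - apply NoDup_map_inj; auto. intros x y E. apply mul_injl in E. auto.
  - intros x y Hx Hy. apply in_map_iff in Hx. destruct Hx as [x0 [<- Hx0]].
    destruct (H5 x0 y Hx0 Hy) as [a [Ha E]].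
    rewrite <- mulA, E, mulKl. exact Ha.
Qed.

Lemma BR_rtrans {G : Group} (A : gset G) g : BR A -> BR (rtrans A g).
Proof.
  intros [n Hn]. exists n. intros H. apply Hn. apply rect_iff in H. apply rect_iff.
  destruct H as [lx [ly [H1 [H2 [H3 [H4 H5]]]]]].
  exists lx, (map (fun y => y • inv g) ly). repeat split; auto.
  - rewrite length_map; auto.
  - apply NoDup_map_inj; auto. intros x y E. apply mul_injr in E. auto.
  - intros x y Hx Hy. apply in_map_iff in Hy. destruct Hy as [y0 [<- Hy0]].
    destruct (H5 x y0 Hx Hy0) as [a [Ha E]].
    rewrite mulA, E, mulKr. exact Ha.
Qed.

Lemma part1 {G : Group} : infinite_group G -> is_ideal (@BR G) /\ translation_invariant (@BR G).
Proof.
  intros HG. split.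
  - split; [apply BR_empty|split; [apply BR_union|split; [|apply not_BR_full; auto]]].
    intros A B HS HA. eapply BR_subset; eauto.
  - intros A g HA. split; [apply BR_ltrans | apply BR_rtrans]; auto.
Qed.

Lemma infinite_set_elems {G : Group} (Z : gset G) : ~ finite_set Z ->
  forall k, exists l, length l = k /\ NoDup l /\ forall x, In x l -> Z x.
Proof.
  intros HZ k. induction k as [|k [l [H1 [H2 H3]]]].
  - exists []. repeat split; auto; [constructor| intros x []].
  - assert (exists z, Z z /\ ~ In z l) as [z [Hz Hzl]].
    { apply NNPP. intros Hc. apply HZ. exists l. intros x Hx. apply NNPP. intros Hn.
      apply Hc. exists x. auto. }
    exists (z :: l). repeat split; simpl; auto.
    + constructor; auto.
    + intros x [<-|Hx]; auto.
Qed.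

Lemma BR_FT {G : Group} (A : gset G) : BR A -> FT A.
Proof.
  intros [n Hn]. exists n. intros gs Hl Hnd. apply NNPP. intros Hfin.
  destruct (infinite_set_elems _ Hfin n) as [l [L1 [L2 L3]]].
  destruct (trunc n gs) as [gs' [G1 [G2 G3]]]; auto; try lia.
  apply Hn. apply rect_iff. exists (map inv gs'), l. repeat split; auto.
  - rewrite length_map; auto.
  - apply NoDup_map_inj; auto. apply inv_inj.
  - intros x y Hx Hy. apply in_map_iff in Hx. destruct Hx as [g [<- Hg]].
    destruct (L3 y Hy g (G3 g Hg)) as [a [Ha E]]. rewrite E, mulKl. exact Ha.
Qed.

Lemma uf_nonempty {G : Group} (p : family G) (P : gset G) : ultrafilter p -> p P -> exists x, P x.
Proof.
  intros [U1 [U2 [U3 [U4 U5]]]] HP. apply NNPP. intros Hc. apply U2.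
  apply (U3 P); auto. intros x Hx. apply Hc. exists x; auto.
Qed.

Lemma uf_not_both {G : Group} (p : family G) (P : gset G) : ultrafilter p -> p P -> p (compl P) -> False.
Proof.
  intros HU HP HC. destruct HU as [U1 [U2 [U3 [U4 U5]]]]. apply U2.
  apply (U3 (inter P (compl P))). intros x [h1 h2]; exact (h2 h1). apply U4; auto.
Qed.

Lemma uf_fin_inter {G : Group} {I : Type} (p : family G) (l : list I) (P : I -> gset G) :
  ultrafilter p -> (forall i, In i l -> p (P i)) -> p (fun z => forall i, In i l -> P i z).
Proof.
  intros HU. destruct HU as [U1 [U2 [U3 [U4 U5]]]]. induction l as [|a l IH]; intros H.
  - apply (U3 (full G)); auto. intros x _ i [].
  - apply (U3 (inter (P a) (fun z => forall i, In i l -> P i z))).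
    + intros x [h1 h2] i [<-|Hi]; auto.
    + apply U4; [apply H; left; auto | apply IH; intros i Hi; apply H; right; auto].
Qed.

Lemma umul_uf {G : Group} (p q : family G) : ultrafilter p -> ultrafilter q -> ultrafilter (umul p q).
Proof.
  intros Hp Hq. pose proof Hp as Hp'. pose proof Hq as Hq'.
  destruct Hp as [P1 [P2 [P3 [P4 P5]]]]. destruct Hq as [Q1 [Q2 [Q3 [Q4 Q5]]]].
  unfold umul. split; [|split; [|split; [|split]]].
  - apply (P3 (full G)); [intros x _; exact Q1 | exact P1].
  - intros H. apply P2. refine (P3 _ _ _ H). intros x h. apply Q2. exact h.
  - intros A B HS H. refine (P3 _ _ _ H). intros x h. refine (Q3 _ _ _ h). intros y; apply HS.
  - intros A B HA HB. apply (P3 (inter (fun x => q (fun y => A (x • y))) (fun x => q (fun y => B (x • y))))).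
    + intros x [h1 h2]. apply Q4; auto.
    + apply P4; auto.
  - intros A. destruct (P5 (fun x => q (fun y => A (x • y)))) as [H|H]; [left; auto|right].
    refine (P3 _ _ _ H). intros x h. unfold compl in h.
    destruct (Q5 (fun y => A (x • y))); [contradiction|auto].
Qed.

Lemma hat_closed {G : Group} : closed_in_beta (hat (@BR G)).
Proof.
  split.
  - intros p [H _]; exact H.
  - intros p Hp Hn. assert (exists A, BR A /\ ~ p (compl A)) as [A [HA HpA]].
    { apply NNPP. intros Hc. apply Hn. split; auto. intros A HA. apply NNPP. intros H.
      apply Hc. exists A. auto. }
    exists A. split.
    + destruct Hp as [_ [_ [_ [_ U5]]]]. destruct (U5 A); [auto|contradiction].
    + intros q Hq HqA [_ Hq2]. apply (uf_not_both q A Hq HqA (Hq2 A HA)).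
Qed.

Lemma hat_char {G : Group} (p : family G) : ultrafilter p ->
  (hat (@BR G) p <-> forall P : gset G, p P -> forall n : nat, has_rectangle P n n).
Proof.
  intros Hp. split.
  - intros [_ H] P HP n. apply NNPP. intros Hn.
    apply (uf_not_both p P Hp HP). apply H. exists n. auto.
  - intros H. split; auto. intros A [n Hn].
    destruct Hp as [_ [_ [_ [_ U5]]]]. destruct (U5 A) as [HA|HA]; auto.
    exfalso. apply Hn. apply H; auto.
Qed.

Lemma BR_shift {G : Group} (A : gset G) (x : G) : BR A -> BR (fun y => A (x • y)).
Proof.
  intros HA. apply (BR_subset (ltrans (inv x) A)); [|apply BR_ltrans; auto].
  intros y Hy. exists (x • y). split; auto. rewrite mulKl. reflexivity.
Qed.

Lemma BR_uset {G : Group} (A : gset G) (q : family G) : ultrafilter q -> BR A ->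
  BR (fun x => q (fun y => A (x • y))).
Proof.
  intros Hq [n Hn]. exists n. intros H. apply Hn. apply rect_iff in H. apply rect_iff.
  destruct H as [lx [ly [H1 [H2 [H3 [H4 H5]]]]]].
  assert (Hq' : q (fun z => forall i, In i (list_prod lx ly) -> A (fst i • snd i • z))).
  { apply (uf_fin_inter q (list_prod lx ly) (fun i z => A (fst i • snd i • z)) Hq).
    intros [x y] Hi. apply in_prod_iff in Hi. destruct Hi as [Hx Hy]. simpl.
    apply (H5 x y Hx Hy). }
  destruct (uf_nonempty q _ Hq Hq') as [z Hz].
  exists lx, (map (fun y => y • z) ly). repeat split; auto.
  - rewrite length_map; auto.
  - apply NoDup_map_inj; auto. intros a b E. apply mul_injr in E; auto.
  - intros x y Hx Hy. apply in_map_iff in Hy. destruct Hy as [y0 [<- Hy0]].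
    rewrite mulA. apply (Hz (x, y0)). apply in_prod; auto.
Qed.

Lemma hat_ideal {G : Group} : infinite_group G -> semigroup_ideal (hat (@BR G)).
Proof.
  intros HG. split; [intros p [H _]; exact H|split].
  - destruct (ultra_ext G (fun A => BR (compl A))) as [U [HU1 [HU2 [HU3 [HU4 [HU5 HU6]]]]]].
    + apply (BR_subset (empty G)); [intros x Hx; apply Hx; exact I | apply BR_empty].
    + intros H. apply (not_BR_full HG). apply (BR_subset (compl (fun _ => False))); auto.
      intros x _ h; exact h.
    + intros A B HA HB. apply (BR_subset (union (compl A) (compl B))); [|apply BR_union; auto].
      intros x Hx. unfold compl, union. destruct (classic (A x)); auto.
    + intros A B HS HA. apply (BR_subset (compl A)); auto. intros x Hx HAx. apply Hx, HS, HAx.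
    + exists U. split.
      * split; [exact HU2|split; [exact HU3|split; [exact HU4|split; [exact HU5|exact HU6]]]].
      * intros A HA. apply HU1. apply (BR_subset A); auto. intros x Hx. apply NNPP. exact Hx.
  - intros p q Hp Hq. split.
    + intros [_ Hh]. split; [apply umul_uf; auto|]. intros A HA. unfold umul.
      pose proof (Hh _ (BR_uset A q Hq HA)) as H.
      destruct Hp as [_ [_ [P3 _]]]. refine (P3 _ _ _ H). intros x Hx.
      destruct Hq as [_ [_ [_ [_ Q5]]]]. destruct (Q5 (fun y => A (x • y))); [contradiction|auto].
    + intros [_ Hh]. split; [apply umul_uf; auto|]. intros A HA. unfold umul.
      destruct Hp as [P1 [_ [P3 _]]]. refine (P3 _ _ _ P1). intros x _.
      exact (Hh _ (BR_shift A x HA)).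
Qed.

Definition prods {G : Group} (X Y : list G) : list G := flat_map (fun x => map (fun y => x • y) Y) X.
Definition quots {G : Group} (S : list G) : list G := flat_map (fun b => map (fun b' => b' • inv b) S) S.

Lemma In_prods {G : Group} (X Y : list G) a :
  In a (prods X Y) <-> exists x y, In x X /\ In y Y /\ a = x • y.
Proof.
  unfold prods. rewrite in_flat_map. split.
  - intros [x [Hx Ha]]. apply in_map_iff in Ha. destruct Ha as [y [E Hy]]. exists x, y. auto.
  - intros [x [y [Hx [Hy E]]]]. exists x. split; auto. apply in_map_iff. exists y. auto.
Qed.

Lemma In_quots {G : Group} (S : list G) e :
  In e (quots S) <-> exists b b', In b S /\ In b' S /\ e = b' • inv b.
Proof.
  unfold quots. rewrite in_flat_map. split.
  - intros [b [Hb He]]. apply in_map_iff in He. destruct He as [b' [E Hb']]. exists b, b'. auto.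
  - intros [b [b' [Hb [Hb' E]]]]. exists b. split; auto. apply in_map_iff. exists b'. auto.
Qed.

Lemma inv_quot {G : Group} (a b : G) : inv (b • inv a) = a • inv b.
Proof. rewrite invM, invK. reflexivity. Qed.

Lemma quots_sym {G : Group} (S : list G) e : In e (quots S) -> In (inv e) (quots S).
Proof.
  intros H. apply In_quots in H. destruct H as [b [b' [Hb [Hb' E]]]]. subst.
  rewrite inv_quot. apply In_quots. exists b', b. auto.
Qed.

Lemma solve1 {G : Group} (a b e : G) : b • inv a = e -> a = inv e • b.
Proof. intros E. subst. rewrite inv_quot, mulKr'. reflexivity. Qed.
Lemma solve2 {G : Group} (a b e : G) : b • inv a = e -> b = e • a.
Proof. intros E. subst. rewrite mulKr'. reflexivity. Qed.

Definition XGood {G : Group} (S X : list G) : Prop :=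
  NoDup X /\ forall x x', In x X -> In x' X -> x <> x' -> ~ In (x' • inv x) (quots S).
Definition Good {G : Group} (S X Y : list G) : Prop :=
  forall a a', In a (prods X Y) -> (In a' S \/ In a' (prods X Y)) -> a <> a' ->
    ~ In (a' • inv a) (quots S).

Lemma X_ex {G : Group} (HG : infinite_group G) (S : list G) m :
  exists X, length X = m /\ XGood S X.
Proof.
  induction m as [|m [X [HL [HN HX]]]].
  - exists []. split; auto. split; [constructor|]. intros x x' [].
  - destruct (avoid HG (X ++ flat_map (fun e => map (fun x' => e • x') X) (quots S))) as [x Hx].
    assert (Hx1 : ~ In x X) by (intros H; apply Hx, in_or_app; auto).
    assert (Hx2 : forall e x', In e (quots S) -> In x' X -> x <> e • x').
    { intros e x' He Hx' E. apply Hx, in_or_app. right. apply in_flat_map. exists e.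
      split; auto. apply in_map_iff. exists x'. auto. }
    exists (x :: X). split; [simpl; auto|]. split; [constructor; auto|].
    intros u u' Hu Hu' Hne HD.
    destruct Hu as [Eu|Hu]; [subst u|]; destruct Hu' as [Eu'|Hu']; [subst u'| |subst u'|].
    + apply Hne; auto.
    + apply (Hx2 (inv (u' • inv x)) u'); auto. apply quots_sym; auto.
      apply solve1. reflexivity.
    + apply (Hx2 (x • inv u) u); auto. apply solve2. reflexivity.
    + apply (HX u u'); auto.
Qed.

Lemma In_prods_cons {G : Group} (X Y : list G) y a :
  In a (prods X (y :: Y)) -> (exists x, In x X /\ a = x • y) \/ In a (prods X Y).
Proof.
  intros H. apply In_prods in H. destruct H as [x [y' [Hx [[<-|Hy] E]]]].
  - left. exists x. auto.
  - right. apply In_prods. exists x, y'. auto.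
Qed.

Lemma In_prods_cons2 {G : Group} (X Y : list G) y a :
  In a (prods X Y) -> In a (prods X (y :: Y)).
Proof.
  intros H. apply In_prods in H. destruct H as [x [y' [Hx [Hy E]]]].
  apply In_prods. exists x, y'. simpl. auto.
Qed.

Lemma In_prods_cons3 {G : Group} (X Y : list G) y x :
  In x X -> In (x • y) (prods X (y :: Y)).
Proof. intros H. apply In_prods. exists x, y. simpl. auto. Qed.

Lemma Y_ex {G : Group} (HG : infinite_group G) (S X : list G) : XGood S X -> forall k,
  exists Y, length Y = k /\ NoDup Y /\ Good S X Y.
Proof.
  intros [HXN HX] k. induction k as [|k [Y [HL [HN HY]]]].
  - exists []. split; auto. split; [constructor|]. intros a a' Ha. exfalso.
    apply In_prods in Ha. destruct Ha as [x [y [_ [[] _]]]].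
  - set (D := quots S).
    destruct (avoid HG (Y ++ flat_map (fun x => flat_map (fun e => map (fun b => inv x • e • b) (S ++ prods X Y)) D) X)) as [y Hy].
    assert (Hy1 : ~ In y Y) by (intros H; apply Hy, in_or_app; auto).
    assert (Hlp : forall x b, In x X -> (In b S \/ In b (prods X Y)) -> ~ In (b • inv (x • y)) D).
    { intros x b Hx Hb HD. apply Hy, in_or_app. right. apply in_flat_map. exists x. split; auto.
      apply in_flat_map. exists (inv (b • inv (x • y))). split; [apply quots_sym; auto|].
      apply in_map_iff. exists b. split; [|apply in_or_app; auto].
      rewrite <- mulA, <- (solve1 _ _ _ eq_refl), mulKl. reflexivity. }
    exists (y :: Y). split; [simpl; auto|]. split; [constructor; auto|].
    intros a a' Ha Ha' Hne HD.
    destruct (In_prods_cons _ _ _ _ Ha) as [[x [Hx Ea]]|Ha0].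
    + destruct Ha' as [Ha'|Ha'].
      * subst a. apply (Hlp x a'); auto.
      * destruct (In_prods_cons _ _ _ _ Ha') as [[x' [Hx' Ea']]|Ha'0].
        -- subst a a'. apply (HX x x'); auto.
           ++ intros E; subst; auto.
           ++ rewrite invM, mulA, mulKr in HD. exact HD.
        -- subst a. apply (Hlp x a'); auto.
    + destruct Ha' as [Ha'|Ha'].
      * apply (HY a a'); auto.
      * destruct (In_prods_cons _ _ _ _ Ha') as [[x' [Hx' Ea']]|Ha'0].
        -- subst a'. apply (Hlp x' a); auto. fold D. rewrite <- inv_quot. apply quots_sym. exact HD.
        -- apply (HY a a'); auto.
Qed.

Lemma step_ex {G : Group} (HG : infinite_group G) (S : list G) m :
  exists p : list G * list G, length (fst p) = m /\ NoDup (fst p) /\ length (snd p) = m /\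
    NoDup (snd p) /\ Good S (fst p) (snd p).
Proof.
  destruct (X_ex HG S m) as [X [HL HXG]].
  destruct (Y_ex HG S X HXG m) as [Y [HL' [HN HY]]].
  exists (X, Y). simpl. destruct HXG. auto.
Qed.

Definition stepf {G : Group} (HG : infinite_group G) (S : list G) (m : nat) : list G * list G :=
  proj1_sig (constructive_indefinite_description _ (step_ex HG S m)).

Lemma stepf_spec {G : Group} (HG : infinite_group G) S m :
  length (fst (stepf HG S m)) = m /\ NoDup (fst (stepf HG S m)) /\ length (snd (stepf HG S m)) = m /\
    NoDup (snd (stepf HG S m)) /\ Good S (fst (stepf HG S m)) (snd (stepf HG S m)).
Proof. unfold stepf. destruct (constructive_indefinite_description _ _) as [p Hp]. exact Hp. Qed.

Fixpoint Sq {G : Group} (HG : infinite_group G) (m : nat) : list G :=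
  match m with
  | 0 => []
  | S m' => Sq HG m' ++ prods (fst (stepf HG (Sq HG m') m')) (snd (stepf HG (Sq HG m') m'))
  end.

Definition Rq {G : Group} (HG : infinite_group G) (m : nat) : list G :=
  prods (fst (stepf HG (Sq HG m) m)) (snd (stepf HG (Sq HG m) m)).

Lemma Sq_S {G : Group} (HG : infinite_group G) m : Sq HG (S m) = Sq HG m ++ Rq HG m.
Proof. reflexivity. Qed.

Lemma Sq_mono {G : Group} (HG : infinite_group G) k m : k <= m -> incl (Sq HG k) (Sq HG m).
Proof.
  intros H. induction H.
  - intros x; auto.
  - rewrite Sq_S. intros x Hx. apply in_or_app. left. auto.
Qed.

Lemma Rq_Sq {G : Group} (HG : infinite_group G) m : incl (Rq HG m) (Sq HG (S m)).
Proof. rewrite Sq_S. intros x Hx. apply in_or_app. auto. Qed.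

Definition Aex {G : Group} (HG : infinite_group G) : gset G := fun a => exists m, In a (Rq HG m).

Lemma Aex_rect {G : Group} (HG : infinite_group G) n : has_rectangle (Aex HG) n n.
Proof.
  apply rect_iff. destruct (stepf_spec HG (Sq HG n) n) as [H1 [H2 [H3 [H4 H5]]]].
  exists (fst (stepf HG (Sq HG n) n)), (snd (stepf HG (Sq HG n) n)). repeat split; auto.
  intros x y Hx Hy. exists n. unfold Rq. apply In_prods. exists x, y. auto.
Qed.

Definition Sol {G : Group} (HG : infinite_group G) (a a' : G) m :=
  In a (Sq HG (S m)) /\ In a' (Sq HG (S m)) /\ (In a (Rq HG m) \/ In a' (Rq HG m)).

Lemma key1 {G : Group} (HG : infinite_group G) a a' : Aex HG a -> Aex HG a' -> exists m, Sol HG a a' m.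
Proof.
  intros [i Hi] [j Hj]. destruct (Nat.le_ge_cases i j) as [H|H].
  - exists j. split; [|split; auto].
    + apply (Sq_mono HG (S i)); [lia|]. apply Rq_Sq; auto.
    + apply Rq_Sq; auto.
  - exists i. split; [|split; auto].
    + apply Rq_Sq; auto.
    + apply (Sq_mono HG (S j)); [lia|]. apply Rq_Sq; auto.
Qed.

Lemma key2 {G : Group} (HG : infinite_group G) a a' m : Sol HG a a' m -> a <> a' ->
  ~ In (a' • inv a) (quots (Sq HG m)).
Proof.
  intros [Ha [Ha' [HR|HR]]] Hne; destruct (stepf_spec HG (Sq HG m) m) as [_ [_ [_ [_ HG5]]]].
  - apply (HG5 a a'); auto. rewrite Sq_S in Ha'. apply in_app_or in Ha'. auto.
  - intros HD. apply (HG5 a' a); auto.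
    + rewrite Sq_S in Ha. apply in_app_or in Ha. auto.
    + rewrite <- inv_quot. apply quots_sym. exact HD.
Qed.

Lemma key3 {G : Group} (HG : infinite_group G) b b' k m : In b (Sq HG (S k)) -> In b' (Sq HG (S k)) -> k < m ->
  In (b' • inv b) (quots (Sq HG m)).
Proof.
  intros Hb Hb' Hk. apply In_quots. exists b, b'. split; [|split; auto].
  - apply (Sq_mono HG (S k)); auto.
  - apply (Sq_mono HG (S k)); auto.
Qed.

Lemma quot_eq {G : Group} (x g0 g1 a a' : G) : x = g0 • a -> x = g1 • a' -> a' • inv a = inv g1 • g0.
Proof.
  intros E0 E1. assert (a = inv g0 • x) as -> by (rewrite E0, mulKl; reflexivity).
  assert (a' = inv g1 • x) as -> by (rewrite E1, mulKl; reflexivity).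
  rewrite invM, invK, <- mulA, mulKl'. reflexivity.
Qed.

Lemma Aex_thin {G : Group} (HG : infinite_group G) : n_thin 1 (Aex HG).
Proof.
  intros gs Hl Hnd.
  destruct gs as [|g0 [|g1 [|g2 gs]]]; try discriminate.
  assert (Hg : g0 <> g1) by (intros E; subst; inversion Hnd; subst; apply H1; left; auto).
  destruct (classic (exists x0, forall g, In g [g0; g1] -> ltrans g (Aex HG) x0)) as [[x0 Hx0]|Hno].
  - destruct (Hx0 g0 (or_introl eq_refl)) as [a0 [Ha0 E0]].
    destruct (Hx0 g1 (or_intror (or_introl eq_refl))) as [a0' [Ha0' E1]].
    destruct (key1 HG a0 a0' Ha0 Ha0') as [m0 Hm0].
    exists (map (fun a => g0 • a) (Sq HG (S m0))). intros x Hx.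
    destruct (Hx g0 (or_introl eq_refl)) as [a [Ha Ea]].
    destruct (Hx g1 (or_intror (or_introl eq_refl))) as [a' [Ha' Ea']].
    destruct (key1 HG a a' Ha Ha') as [m Hm].
    assert (Hne : a <> a') by (intros E; subst; apply Hg; apply (mul_injr a'); auto).
    assert (Hle : m <= m0).
    { destruct (Nat.le_gt_cases m m0) as [H|H]; auto. exfalso.
      apply (key2 HG a a' m Hm Hne). rewrite (quot_eq x g0 g1 a a' Ea Ea').
      rewrite <- (quot_eq x0 g0 g1 a0 a0' E0 E1).
      destruct Hm0 as [B1 [B2 _]]. apply key3 with m0; auto. }
    apply in_map_iff. exists a. split; [auto|].
    apply (Sq_mono HG (S m)); [lia|]. destruct Hm as [B1 _]. exact B1.
  - exists []. intros x Hx. exfalso. apply Hno. exists x. exact Hx.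
Qed.

Lemma example {G : Group} (HG : infinite_group G) : exists A : gset G, FT A /\ ~ BR A.
Proof.
  exists (Aex HG). split.
  - exists 1. apply Aex_thin.
  - intros [n Hn]. apply Hn. apply Aex_rect.
Qed.

Theorem theorem6p7 (G : Group) (HG : infinite_group G) :
  (is_ideal (@BR G) /\ translation_invariant (@BR G)) /\
  (closed_in_beta (hat (@BR G)) /\ semigroup_ideal (hat (@BR G)) /\
   forall p : family G, ultrafilter p ->
     (hat (@BR G) p <-> forall P : gset G, p P -> forall n : nat, has_rectangle P n n)) /\
  ((forall A : gset G, BR A -> FT A) /\ exists A : gset G, FT A /\ ~ BR A).
Proof.
  split; [apply part1; exact HG|].
  split; [split; [apply hat_closed|split; [apply hat_ideal; exact HG|apply hat_char]]|].
  split; [apply BR_FT|apply example; exact HG].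
Qed.
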